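(* Let $W_\circ=\bigcup_{\lambda\in\Lambda^\circ}W(\lambda)$. Exactly one of the following holds: (a) if $\underline f<0<\overline f$, then $f(\lambda)=0$ has a unique solution $\hat\lambda\in\Lambda^\circ$ and $\widehat W=W_\circ=\{w(\hat\lambda)\}$; (b) if $\underline f=0=\overline f$, then $f(\lambda)=0$ for every $\lambda\in\Lambda^\circ$ and $\widehat W=W_\circ=\{0\}$; (c) in all other cases, $f(\lambda)=0$ has no solution in $\Lambda^\circ$ and $W_\circ=\emptyset$.
   Context: Regular dimension-reduced canonical form: $q\ge1$, $\gamma_1>\dots>\gamma_q$ nonzero reals with $\gamma_1>0$, $\Gamma^*=\operatorname{diag}(\gamma_1,\dots,\gamma_q)$, $\delta=(\delta_i)$ with $\delta_i\ge0$, $k^*\in\mathbb{R}$, $\varepsilon\ge0$; either ($m_0=0$) $\varepsilon=0$, $w=z\in\mathbb{R}^q$, $w_0=\delta$, $\Delta=\Gamma^*$, $d=0$; or ($m_0>0$) $\varepsilon>0$, $w=(y,z^\top)^\top\in\mathbb{R}^{q+1}$, $w_0=(0,\delta^\top)^\top$, $\Delta=\operatorname{diag}(0,\Gamma^* )$, $d=\varepsilon e_1$. Problem: minimise $\|w-w_0\|^2$ over $W=\{w:Q^*(w)=0\}\neq\emptyset$, $Q^*(w)=w^\top\Delta w+2d^\top w-k^*$; $\widehat W$ is the set of minimisers. Admissible region $\Lambda=(-\infty,\gamma_1^{-1}]$ if $\gamma_q>0$, $[\gamma_q^{-1},\gamma_1^{-1}]$ if $\gamma_q<0$; $\Lambda^\circ$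 its interior. $W(\lambda)$ is the set of $w\in W$ with $(I-\lambda\Delta)w=w_0+\lambda d$. For $\lambda\in\Lambda^\circ$, $w(\lambda)=(I-\lambda\Delta)^{-1}(w_0+\lambda d)$, $f(\lambda)=\sum_{i=1}^q(1-\lambda\gamma_i)^{-2}\gamma_i\delta_i^2+2\varepsilon^2\lambda-k^*$, $\underline f=\inf_{\Lambda^\circ}f$, $\overline f=\sup_{\Lambda^\circ}f$. *)

(* Defs.v *)
From Stdlib Require Import Reals Lra Lia.
Open Scope R_scope.

Fixpoint rsum (n : nat) (f : nat -> R) : R :=
  match n with
  | O => 0
  | S m => rsum m f + f m
  end.

(* Conventions.
   - gamma i, delta i (0 <= i < q) stand for gamma_{i+1}, delta_{i+1}.
   - b = false : case m0 = 0, w = z in R^q (indices 0..q-1).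
     b = true  : case m0 > 0, w = (y, z) in R^(q+1), index 0 is y,
                 index k+1 is z_{k+1}.
   - A vector of R^n is a function nat -> R vanishing at indices >= n. *)

Definition dim (b : bool) (q : nat) : nat := if b then S q else q.

Definition Rvec (n : nat) (w : nat -> R) : Prop :=
  forall i, (n <= i)%nat -> w i = 0.

Definition Delta (b : bool) (gamma : nat -> R) (j : nat) : R :=
  if b then match j with O => 0 | S k => gamma k end else gamma j.

Definition w0 (b : bool) (q : nat) (delta : nat -> R) (j : nat) : R :=
  if (dim b q <=? j)%nat then 0 else
  if b then match j with O => 0 | S k => delta k end else delta j.

Definition dvec (b : bool) (eps : R) (j : nat) : R :=
  if b then match j with O => eps | S _ => 0 end else 0.

Definition Qstar (b : bool) (q : nat) (gamma : nat -> R) (eps kst : R)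
  (w : nat -> R) : R :=
  rsum (dim b q) (fun j => Delta b gamma j * w j ^ 2)
  + 2 * rsum (dim b q) (fun j => dvec b eps j * w j) - kst.

Definition InW b q gamma eps kst (w : nat -> R) : Prop :=
  Rvec (dim b q) w /\ Qstar b q gamma eps kst w = 0.

Definition dist2 b q delta (w : nat -> R) : R :=
  rsum (dim b q) (fun j => (w j - w0 b q delta j) ^ 2).

Definition What b q gamma delta eps kst (w : nat -> R) : Prop :=
  InW b q gamma eps kst w /\
  forall v, InW b q gamma eps kst v -> dist2 b q delta w <= dist2 b q delta v.

Definition Lam (q : nat) (gamma : nat -> R) (l : R) : Prop :=
  if Rlt_dec 0 (gamma (q - 1)%nat) then l <= / gamma 0%nat
  else / gamma (q - 1)%nat <= l /\ l <= / gamma 0%nat.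

Definition Lam_int (q : nat) (gamma : nat -> R) (l : R) : Prop :=
  if Rlt_dec 0 (gamma (q - 1)%nat) then l < / gamma 0%nat
  else / gamma (q - 1)%nat < l /\ l < / gamma 0%nat.

Definition Wl b q gamma delta eps kst (l : R) (w : nat -> R) : Prop :=
  InW b q gamma eps kst w /\
  forall j, (j < dim b q)%nat ->
    (1 - l * Delta b gamma j) * w j = w0 b q delta j + l * dvec b eps j.

Definition wlam b q gamma delta eps (l : R) (j : nat) : R :=
  if (dim b q <=? j)%nat then 0 else
  (w0 b q delta j + l * dvec b eps j) / (1 - l * Delta b gamma j).

Definition fsec (q : nat) (gamma delta : nat -> R) (eps kst : R) (l : R) : R :=
  rsum q (fun i => gamma i * delta i ^ 2 / (1 - l * gamma i) ^ 2)
  + 2 * eps ^ 2 * l - kst.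

Definition Wcirc b q gamma delta eps kst (w : nat -> R) : Prop :=
  exists l, Lam_int q gamma l /\ Wl b q gamma delta eps kst l w.

(* Main.v *)
From Stdlib Require Import Reals Lra Lia Psatz FunctionalExtensionality Classical.
Require Import Defs.
Open Scope R_scope.

Lemma rsum_ext n f g : (forall i, (i < n)%nat -> f i = g i) -> rsum n f = rsum n g.
Proof. induction n; simpl; intros H; auto. rewrite IHn by (intros; apply H; lia). rewrite H by lia. auto. Qed.

Lemma rsum_zero n f : (forall i, (i < n)%nat -> f i = 0) -> rsum n f = 0.
Proof. induction n; simpl; intros H; auto. rewrite IHn by (intros; apply H; lia). rewrite H by lia. ring. Qed.

Lemma rsum_nonneg n f : (forall i, (i < n)%nat -> 0 <= f i) -> 0 <= rsum n f.
Proof. induction n; simpl; intros H; [lra|]. pose proof (IHn (fun i h => H i ltac:(lia))). pose proof (H n ltac:(lia)). lra. Qed.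

Lemma rsum_nonneg_zero n f : (forall i, (i < n)%nat -> 0 <= f i) -> rsum n f = 0 ->
  forall i, (i < n)%nat -> f i = 0.
Proof. induction n; simpl; intros H E i Hi; [lia|].
  pose proof (rsum_nonneg n f (fun i h => H i ltac:(lia))). pose proof (H n ltac:(lia)).
  destruct (Nat.eq_dec i n). subst; lra. apply IHn; [intros; apply H; lia| lra | lia]. Qed.

Lemma rsum_le n f g : (forall i, (i < n)%nat -> f i <= g i) -> rsum n f <= rsum n g.
Proof. induction n; simpl; intros H; [lra|]. pose proof (IHn (fun i h => H i ltac:(lia))). pose proof (H n ltac:(lia)). lra. Qed.

Lemma rsum_lt n f g : (forall i, (i < n)%nat -> f i <= g i) ->
  (exists i, (i < n)%nat /\ f i < g i) -> rsum n f < rsum n g.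
Proof. induction n; simpl; intros H [i [Hi Hl]]; [lia|].
  pose proof (rsum_le n f g (fun i h => H i ltac:(lia))). pose proof (H n ltac:(lia)).
  destruct (Nat.eq_dec i n). subst; lra.
  assert (Hi' : (i < n)%nat) by lia.
  assert (rsum n f < rsum n g) by (apply IHn; [intros j hj; apply H; lia | exists i; auto]). lra. Qed.

Lemma rsum_S n f : rsum (S n) f = f 0%nat + rsum n (fun i => f (S i)).
Proof. induction n; simpl in *. ring. rewrite IHn. ring. Qed.

Lemma key_id n (A D W0 w : nat -> R) l :
  (forall j, (j < n)%nat -> 0 < 1 - l * A j) ->
  rsum n (fun j => (w j - W0 j)^2) =
  l * (rsum n (fun j => A j * w j ^ 2) + 2 * rsum n (fun j => D j * w j))
  + rsum n (fun j => (1 - l * A j) * (w j - (W0 j + l * D j) / (1 - l * A j))^2)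
  + rsum n (fun j => W0 j ^ 2 - (1 - l * A j) * ((W0 j + l * D j) / (1 - l * A j))^2).
Proof. induction n; intros H; [simpl; ring|]. cbn [rsum].
  rewrite IHn by (intros; apply H; lia). pose proof (H n ltac:(lia)). field. lra. Qed.

Lemma gamma_mono q (gamma : nat -> R) :
  (forall i, (S i < q)%nat -> gamma (S i) < gamma i) ->
  forall i j, (i <= j)%nat -> (j < q)%nat -> gamma j <= gamma i.
Proof. intros H i j Hij. induction Hij; intros Hj; [lra|].
  pose proof (H m Hj). pose proof (IHHij ltac:(lia)). lra. Qed.

Lemma mul_inv_lt g l : 0 < g -> l < / g -> l * g < 1.
Proof. intros Hg Hl. replace 1 with (/g * g) by (field; lra).
  apply Rmult_lt_compat_r; lra. Qed.

Lemma mul_inv_lt_neg g l : g < 0 -> / g < l -> l * g < 1.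
Proof. intros Hg Hl. replace 1 with (/g * g) by (field; lra).
  apply Rmult_lt_gt_compat_neg_l with (r := g) in Hl; lra. Qed.

Lemma lam_bounds q gamma l :
  (1 <= q)%nat ->
  (forall i, (S i < q)%nat -> gamma (S i) < gamma i) ->
  (forall i, (i < q)%nat -> gamma i <> 0) ->
  0 < gamma 0%nat -> Lam_int q gamma l ->
  l * gamma 0%nat < 1 /\ l * gamma (q-1)%nat < 1.
Proof. intros hq hgdec hgnz hg1. unfold Lam_int.
  pose proof (gamma_mono q gamma hgdec 0 (q-1) ltac:(lia) ltac:(lia)).
  destruct (Rlt_dec 0 (gamma (q - 1)%nat)) as [Hp|Hn]; intros Hl.
  - pose proof (mul_inv_lt _ _ hg1 Hl). split; auto.
    destruct (Rle_dec l 0); nra.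
  - assert (gamma (q-1)%nat < 0) by (pose proof (hgnz (q-1)%nat ltac:(lia)); lra).
    split; [apply mul_inv_lt; tauto | apply mul_inv_lt_neg; tauto]. Qed.

Lemma pos_den q gamma l :
  (1 <= q)%nat ->
  (forall i, (S i < q)%nat -> gamma (S i) < gamma i) ->
  (forall i, (i < q)%nat -> gamma i <> 0) ->
  0 < gamma 0%nat -> Lam_int q gamma l ->
  forall i, (i < q)%nat -> 0 < 1 - l * gamma i.
Proof. intros hq hgdec hgnz hg1 Hl i Hi.
  destruct (lam_bounds q gamma l hq hgdec hgnz hg1 Hl).
  pose proof (gamma_mono q gamma hgdec 0 i ltac:(lia) Hi).
  pose proof (gamma_mono q gamma hgdec i (q-1) ltac:(lia) ltac:(lia)).
  destruct (Rle_dec 0 l); nra. Qed.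

Lemma pos_den_D b q gamma l :
  (1 <= q)%nat ->
  (forall i, (S i < q)%nat -> gamma (S i) < gamma i) ->
  (forall i, (i < q)%nat -> gamma i <> 0) ->
  0 < gamma 0%nat -> Lam_int q gamma l ->
  forall j, (j < dim b q)%nat -> 0 < 1 - l * Delta b gamma j.
Proof. intros hq hgdec hgnz hg1 Hl j Hj. pose proof (pos_den q gamma l hq hgdec hgnz hg1 Hl) as P.
  destruct b; unfold dim, Delta in *; [destruct j; [lra| apply P; lia] | apply P; lia]. Qed.

Lemma Lam_int_conv q gamma x y z :
  Lam_int q gamma x -> Lam_int q gamma y -> x <= z <= y -> Lam_int q gamma z.
Proof. unfold Lam_int. destruct Rlt_dec; intros; lra. Qed.

Lemma Lam_int_open q gamma l : Lam_int q gamma l ->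
  exists l1 l2, Lam_int q gamma l1 /\ Lam_int q gamma l2 /\ l1 < l /\ l < l2.
Proof. unfold Lam_int. destruct Rlt_dec; intros H.
  - exists (l-1), ((l + / gamma 0%nat)/2). lra.
  - exists ((l + / gamma (q-1)%nat)/2), ((l + / gamma 0%nat)/2). lra. Qed.

Lemma Lam_int_ne q gamma :
  (1 <= q)%nat ->
  (forall i, (S i < q)%nat -> gamma (S i) < gamma i) ->
  (forall i, (i < q)%nat -> gamma i <> 0) ->
  0 < gamma 0%nat -> exists l, Lam_int q gamma l.
Proof. intros hq hgdec hgnz hg1. unfold Lam_int. pose proof (Rinv_0_lt_compat _ hg1).
  destruct Rlt_dec.
  - exists (/ gamma 0%nat - 1). lra.
  - exists 0. assert (gamma (q-1)%nat < 0) by (pose proof (hgnz (q-1)%nat ltac:(lia)); lra).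
    pose proof (Rinv_lt_0_compat _ H0). lra. Qed.

Lemma leb_false a c : (a < c)%nat -> (c <=? a)%nat = false.
Proof. intros; apply Nat.leb_gt; lia. Qed.

Lemma Q_wlam (b : bool) (q : nat) (gamma delta : nat -> R) (eps kst l : R) :
  (1 <= q)%nat ->
  (forall i, (S i < q)%nat -> gamma (S i) < gamma i) ->
  (forall i, (i < q)%nat -> gamma i <> 0) ->
  0 < gamma 0%nat ->
  (if b then 0 < eps else eps = 0) -> Lam_int q gamma l ->
  Qstar b q gamma eps kst (wlam b q gamma delta eps l) = fsec q gamma delta eps kst l.
Proof. intros hq hgdec hgnz hg1 heps Hl.
  pose proof (pos_den q gamma l hq hgdec hgnz hg1 Hl) as P.
  unfold Qstar, fsec. destruct b; unfold dim.
  - rewrite !rsum_S.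
    rewrite (rsum_ext q _ (fun i => gamma i * delta i ^ 2 / (1 - l * gamma i) ^ 2)).
    2:{ intros i Hi. unfold wlam, w0, dim, Delta, dvec. rewrite !leb_false by lia.
        pose proof (P i Hi). field. lra. }
    rewrite (rsum_zero q (fun i => dvec true eps (S i) * wlam true q gamma delta eps l (S i))) by (intros; unfold dvec; ring).
    unfold wlam, w0, dim, Delta, dvec. rewrite !leb_false by lia. field.
  - subst eps.
    rewrite (rsum_ext q _ (fun i => gamma i * delta i ^ 2 / (1 - l * gamma i) ^ 2)).
    2:{ intros i Hi. unfold wlam, w0, dim, Delta, dvec. rewrite !leb_false by lia.
        pose proof (P i Hi). field. lra. }
    rewrite (rsum_zero q (fun i => dvec false 0 i * wlam false q gamma delta 0 l i)) by (intros; unfold dvec; ring).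
    ring. Qed.

Section Main.
Variables (q : nat) (gamma delta : nat -> R) (kst eps : R) (b : bool)
  (hq : (1 <= q)%nat)
  (hgdec : forall i, (S i < q)%nat -> gamma (S i) < gamma i)
  (hgnz : forall i, (i < q)%nat -> gamma i <> 0)
  (hg1 : 0 < gamma 0%nat)
  (hdelta : forall i, (i < q)%nat -> 0 <= delta i)
  (heps : if b then 0 < eps else eps = 0).

Let F := fsec q gamma delta eps kst.

Lemma wlam_eq l j : (j < dim b q)%nat ->
  wlam b q gamma delta eps l j = (w0 b q delta j + l * dvec b eps j) / (1 - l * Delta b gamma j).
Proof. intros; unfold wlam; rewrite leb_false; auto. Qed.

Lemma wlam_out l j : (dim b q <= j)%nat -> wlam b q gamma delta eps l j = 0.
Proof. intros; unfold wlam. replace (dim b q <=? j)%nat with true; auto. symmetry; apply Nat.leb_le; auto. Qed.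

Lemma Wl_char l w : Lam_int q gamma l ->
  (Wl b q gamma delta eps kst l w <-> w = wlam b q gamma delta eps l /\ F l = 0).
Proof. intros Hl. pose proof (pos_den_D b q gamma l hq hgdec hgnz hg1 Hl) as P.
  pose proof (Q_wlam b q gamma delta eps kst l hq hgdec hgnz hg1 heps Hl) as QW.
  split.
  - intros [[Rv Qw] E].
    assert (w = wlam b q gamma delta eps l).
    { apply functional_extensionality; intros j.
      destruct (Nat.lt_ge_cases j (dim b q)).
      + rewrite wlam_eq by auto. pose proof (P j H). rewrite <- E by auto. field. lra.
      + rewrite wlam_out by auto. apply Rv; auto. }
    split; auto. unfold F. rewrite <- QW, <- H. auto.
  - intros [-> HF]. split; [split|].
    + intros j Hj; apply wlam_out; auto.
    + rewrite QW; auto.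
    + intros j Hj. rewrite wlam_eq by auto. pose proof (P j Hj). field. lra. Qed.

Lemma What_char l w : Lam_int q gamma l -> F l = 0 ->
  (What b q gamma delta eps kst w <-> w = wlam b q gamma delta eps l).
Proof. intros Hl HF. pose proof (pos_den_D b q gamma l hq hgdec hgnz hg1 Hl) as P.
  pose proof (Q_wlam b q gamma delta eps kst l hq hgdec hgnz hg1 heps Hl) as QW.
  set (n := dim b q).
  set (S := fun v : nat -> R => rsum n (fun j => (1 - l * Delta b gamma j) *
        (v j - (w0 b q delta j + l * dvec b eps j) / (1 - l * Delta b gamma j))^2)).
  set (C := rsum n (fun j => w0 b q delta j ^ 2 - (1 - l * Delta b gamma j) *
        ((w0 b q delta j + l * dvec b eps j) / (1 - l * Delta b gamma j))^2)).
  assert (KD : forall v, InW b q gamma eps kst v -> dist2 b q delta v = l * kst + S v + C).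
  { intros v [_ Qv]. unfold dist2. fold n. rewrite (key_id n (Delta b gamma) (dvec b eps) (w0 b q delta) v l P).
    unfold Qstar in Qv. fold n in Qv. unfold S, C. f_equal. f_equal. f_equal. lra. }
  assert (Snn : forall v, 0 <= S v).
  { intros v. apply rsum_nonneg. intros j Hj. pose proof (P j Hj). apply Rmult_le_pos; [lra| apply pow2_ge_0]. }
  assert (S0 : S (wlam b q gamma delta eps l) = 0).
  { apply rsum_zero. intros j Hj. rewrite wlam_eq by auto. ring. }
  assert (InWl : InW b q gamma eps kst (wlam b q gamma delta eps l)).
  { split. intros j Hj; apply wlam_out; auto. rewrite QW; auto. }
  split.
  - intros [Iw Hmin]. pose proof (Hmin _ InWl). rewrite (KD _ Iw), (KD _ InWl) in H.
    pose proof (Snn w).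
    assert (Sw : S w = 0) by lra.
    pose proof (rsum_nonneg_zero n _ (fun j Hj => Rmult_le_pos _ _ (Rlt_le _ _ (P j Hj)) (pow2_ge_0 _)) Sw) as Z.
    apply functional_extensionality; intros j.
    destruct (Nat.lt_ge_cases j n) as [Hj|Hj].
    + rewrite wlam_eq by auto. pose proof (Z j Hj) as Zj. simpl in Zj. pose proof (P j Hj).
      apply Rmult_integral in Zj. destruct Zj as [Zj|Zj]; [lra|].
      apply Rmult_integral in Zj. destruct Zj; lra.
    + rewrite wlam_out by auto. destruct Iw as [Rv _]. apply Rv; auto.
  - intros ->. split; auto. intros v Iv. rewrite (KD _ Iv), (KD _ InWl). rewrite S0.
    pose proof (Snn v). lra. Qed.

Lemma term_diff g d l1 l2 : 0 < 1 - l1 * g -> 0 < 1 - l2 * g ->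
  g * d ^ 2 / (1 - l2 * g) ^ 2 - g * d ^ 2 / (1 - l1 * g) ^ 2 =
  (g * d) ^ 2 * (l2 - l1) * ((1 - l1 * g) + (1 - l2 * g)) / ((1 - l1 * g) ^ 2 * (1 - l2 * g) ^ 2).
Proof. intros. field. lra. Qed.

Lemma term_le g d l1 l2 : l1 < l2 -> 0 < 1 - l1 * g -> 0 < 1 - l2 * g ->
  g * d ^ 2 / (1 - l1 * g) ^ 2 <= g * d ^ 2 / (1 - l2 * g) ^ 2.
Proof. intros H H1 H2. pose proof (term_diff g d l1 l2 H1 H2).
  assert (0 <= (g * d) ^ 2 * (l2 - l1) * ((1 - l1 * g) + (1 - l2 * g)) / ((1 - l1 * g) ^ 2 * (1 - l2 * g) ^ 2)).
  { unfold Rdiv. apply Rmult_le_pos. apply Rmult_le_pos. apply Rmult_le_pos. apply pow2_ge_0. lra. lra.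
    apply Rlt_le, Rinv_0_lt_compat. apply Rmult_lt_0_compat; apply pow_lt; lra. }
  lra. Qed.

Lemma term_lt g d l1 l2 : l1 < l2 -> 0 < 1 - l1 * g -> 0 < 1 - l2 * g -> g <> 0 -> d <> 0 ->
  g * d ^ 2 / (1 - l1 * g) ^ 2 < g * d ^ 2 / (1 - l2 * g) ^ 2.
Proof. intros H H1 H2 Hg Hd. pose proof (term_diff g d l1 l2 H1 H2).
  assert (0 < (g * d) ^ 2 * (l2 - l1) * ((1 - l1 * g) + (1 - l2 * g)) / ((1 - l1 * g) ^ 2 * (1 - l2 * g) ^ 2)).
  { unfold Rdiv. apply Rmult_lt_0_compat. apply Rmult_lt_0_compat. apply Rmult_lt_0_compat.
    replace ((g*d)^2) with (Rsqr (g*d)) by (unfold Rsqr; ring).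
    apply Rsqr_pos_lt. apply Rmult_integral_contrapositive; auto. lra. lra.
    apply Rinv_0_lt_compat. apply Rmult_lt_0_compat; apply pow_lt; lra. }
  lra. Qed.

Definition nondeg := eps <> 0 \/ exists i, (i < q)%nat /\ delta i <> 0.

Lemma F_le l1 l2 : Lam_int q gamma l1 -> Lam_int q gamma l2 -> l1 <= l2 -> F l1 <= F l2.
Proof. intros H1 H2 Hle. destruct (Req_dec l1 l2) as [->|Hne]; [lra|].
  pose proof (pos_den q gamma l1 hq hgdec hgnz hg1 H1) as P1.
  pose proof (pos_den q gamma l2 hq hgdec hgnz hg1 H2) as P2.
  unfold F, fsec.
  assert (rsum q (fun i => gamma i * delta i ^ 2 / (1 - l1 * gamma i) ^ 2) <=
          rsum q (fun i => gamma i * delta i ^ 2 / (1 - l2 * gamma i) ^ 2)).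
  { apply rsum_le. intros i Hi. apply term_le; auto. lra. }
  assert (0 <= eps ^ 2) by apply pow2_ge_0. nra. Qed.

Lemma F_lt l1 l2 : nondeg -> Lam_int q gamma l1 -> Lam_int q gamma l2 -> l1 < l2 -> F l1 < F l2.
Proof. intros ND H1 H2 Hle.
  pose proof (pos_den q gamma l1 hq hgdec hgnz hg1 H1) as P1.
  pose proof (pos_den q gamma l2 hq hgdec hgnz hg1 H2) as P2.
  unfold F, fsec.
  assert (rsum q (fun i => gamma i * delta i ^ 2 / (1 - l1 * gamma i) ^ 2) <=
          rsum q (fun i => gamma i * delta i ^ 2 / (1 - l2 * gamma i) ^ 2)).
  { apply rsum_le. intros i Hi. apply term_le; auto. }
  assert (0 <= eps ^ 2) by apply pow2_ge_0.
  destruct ND as [He | [i [Hi Hd]]].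
  - assert (0 < eps ^ 2) by (replace (eps^2) with (Rsqr eps) by (unfold Rsqr; ring); apply Rsqr_pos_lt; auto).
    nra.
  - assert (rsum q (fun i => gamma i * delta i ^ 2 / (1 - l1 * gamma i) ^ 2) <
          rsum q (fun i => gamma i * delta i ^ 2 / (1 - l2 * gamma i) ^ 2)).
    { apply rsum_lt. intros j Hj. apply term_le; auto.
      exists i; split; auto. apply term_lt; auto. }
    nra. Qed.

Lemma F_const l : ~ nondeg -> F l = - kst.
Proof. intros ND. unfold F, fsec.
  assert (eps = 0) by (destruct (Req_dec eps 0); auto; exfalso; apply ND; left; auto).
  rewrite rsum_zero. rewrite H; ring.
  intros i Hi. destruct (Req_dec (delta i) 0) as [->|Hd]. unfold Rdiv; ring.
  exfalso; apply ND; right; exists i; auto. Qed.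

Lemma F_cont l : Lam_int q gamma l -> continuity_pt F l.
Proof. intros Hl. pose proof (pos_den q gamma l hq hgdec hgnz hg1 Hl) as P.
  unfold F, fsec.
  apply (continuity_pt_minus (fun l => rsum q (fun i => gamma i * delta i ^ 2 / (1 - l * gamma i) ^ 2) + 2 * eps ^ 2 * l) (fun _ => kst)).
  2: apply continuity_pt_const; intros x y; auto.
  apply (continuity_pt_plus (fun l => rsum q (fun i => gamma i * delta i ^ 2 / (1 - l * gamma i) ^ 2)) (fun l => 2 * eps ^ 2 * l)).
  2: apply derivable_continuous_pt; reg.
  assert (forall n, (n <= q)%nat -> continuity_pt (fun l => rsum n (fun i => gamma i * delta i ^ 2 / (1 - l * gamma i) ^ 2)) l).
  { induction n; intros Hn.
    - simpl. apply continuity_pt_const; intros x y; auto.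
    - simpl. apply (continuity_pt_plus (fun l => rsum n (fun i => gamma i * delta i ^ 2 / (1 - l * gamma i) ^ 2)) (fun l => gamma n * delta n ^ 2 / (1 - l * gamma n) ^ 2)).
      apply IHn; lia.
      pose proof (P n ltac:(lia)).
      apply derivable_continuous_pt. reg. apply pow_nonzero. lra. }
  apply H; lia. Qed.

Lemma main :
  ((exists l, Lam_int q gamma l /\ fsec q gamma delta eps kst l < 0) /\
   (exists l, Lam_int q gamma l /\ 0 < fsec q gamma delta eps kst l) ->
   exists lh, Lam_int q gamma lh /\ fsec q gamma delta eps kst lh = 0 /\
     (forall l, Lam_int q gamma l -> fsec q gamma delta eps kst l = 0 -> l = lh) /\
     (forall w, What b q gamma delta eps kst w <-> w = wlam b q gamma delta eps lh) /\
     (forall w, Wcirc b q gamma delta eps kst w <-> w = wlam b q gamma delta eps lh))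
  /\
  ((forall l, Lam_int q gamma l -> fsec q gamma delta eps kst l = 0) ->
   (forall l, Lam_int q gamma l -> fsec q gamma delta eps kst l = 0) /\
   (forall w, What b q gamma delta eps kst w <-> w = (fun _ => 0)) /\
   (forall w, Wcirc b q gamma delta eps kst w <-> w = (fun _ => 0)))
  /\
  (~ ((exists l, Lam_int q gamma l /\ fsec q gamma delta eps kst l < 0) /\
      (exists l, Lam_int q gamma l /\ 0 < fsec q gamma delta eps kst l)) ->
   ~ (forall l, Lam_int q gamma l -> fsec q gamma delta eps kst l = 0) ->
   (forall l, Lam_int q gamma l -> fsec q gamma delta eps kst l <> 0) /\
   (forall w, ~ Wcirc b q gamma delta eps kst w)).
Proof.
  split; [|split].
  - intros [[l1 [I1 F1]] [l2 [I2 F2]]].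
    assert (ND : nondeg).
    { destruct (classic nondeg) as [N|N]; auto. pose proof (F_const l1 N). pose proof (F_const l2 N).
      unfold F in *. lra. }
    assert (Hlt : l1 < l2).
    { destruct (Rlt_dec l1 l2); auto. pose proof (F_le l2 l1 I2 I1 ltac:(lra)). unfold F in *. lra. }
    destruct (Ranalysis5.IVT_interv F l1 l2 (fun a Ha => F_cont a (Lam_int_conv q gamma l1 l2 a I1 I2 Ha)) Hlt F1 F2)
      as [lh [Hr Hz]].
    assert (Ih : Lam_int q gamma lh) by (apply (Lam_int_conv q gamma l1 l2); auto).
    assert (U : forall l, Lam_int q gamma l -> fsec q gamma delta eps kst l = 0 -> l = lh).
    { intros l Il Fl. destruct (total_order_T l lh) as [[Hl|Hl]|Hl]; auto.
      - pose proof (F_lt l lh ND Il Ih Hl). unfold F in *. lra.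
      - pose proof (F_lt lh l ND Ih Il Hl). unfold F in *. lra. }
    exists lh. split; [auto|split; [exact Hz|split; [exact U|split]]].
    + intros w. apply What_char; auto.
    + intros w. split.
      * intros [l [Il Wl']]. apply (Wl_char l w Il) in Wl'. destruct Wl' as [-> Fl].
        rewrite (U l Il Fl). auto.
      * intros ->. exists lh. split; auto. apply Wl_char; auto.
  - intros Hall. split; [exact Hall|].
    destruct (Lam_int_ne q gamma hq hgdec hgnz hg1) as [l0 I0].
    assert (ND : ~ nondeg).
    { intros N. destruct (Lam_int_open q gamma l0 I0) as [l1 [l2 [I1 [I2 [H1 H2]]]]].
      pose proof (F_lt l1 l0 N I1 I0 H1). pose proof (Hall l1 I1). pose proof (Hall l0 I0).
      unfold F in *. lra. }
    assert (He : eps = 0) by (destruct (Req_dec eps 0); auto; exfalso; apply ND; left; auto).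
    assert (Hd : forall i, (i < q)%nat -> delta i = 0).
    { intros i Hi. destruct (Req_dec (delta i) 0); auto. exfalso; apply ND; right; exists i; auto. }
    assert (Z : forall l, wlam b q gamma delta eps l = fun _ => 0).
    { intros l; apply functional_extensionality; intros j. unfold wlam, w0, dvec.
      destruct (dim b q <=? j)%nat eqn:E; auto. apply Nat.leb_gt in E. rewrite He.
      destruct b; unfold dim in E; [destruct j; [|rewrite Hd by lia] | rewrite Hd by lia];
      unfold Rdiv; ring. }
    split.
    + intros w. rewrite <- (Z l0). apply What_char; auto.
    + intros w. split.
      * intros [l [Il Wl']]. apply (Wl_char l w Il) in Wl'. destruct Wl' as [-> _]. apply Z.
      * intros ->. exists l0. split; auto. rewrite <- (Z l0). apply Wl_char; auto.
  - intros NA NB.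
    assert (NZ : forall l, Lam_int q gamma l -> fsec q gamma delta eps kst l <> 0).
    { intros l Il Fl. destruct (classic nondeg) as [N|N].
      - destruct (Lam_int_open q gamma l Il) as [l1 [l2 [I1 [I2 [H1 H2]]]]].
        apply NA. split.
        + exists l1. split; auto. pose proof (F_lt l1 l N I1 Il H1). unfold F in *. lra.
        + exists l2. split; auto. pose proof (F_lt l l2 N Il I2 H2). unfold F in *. lra.
      - apply NB. intros l' _. pose proof (F_const l' N). pose proof (F_const l N). unfold F in *. lra. }
    split; auto.
    intros w [l [Il Wl']]. apply (Wl_char l w Il) in Wl'. destruct Wl' as [_ Fl]. exact (NZ l Il Fl).
Qed.
End Main.

Theorem proposition8p2
  (q : nat) (gamma delta : nat -> R) (kst eps : R) (b : bool)
  (hq : (1 <= q)%nat)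
  (hgdec : forall i, (S i < q)%nat -> gamma (S i) < gamma i)
  (hgnz : forall i, (i < q)%nat -> gamma i <> 0)
  (hg1 : 0 < gamma 0%nat)
  (hdelta : forall i, (i < q)%nat -> 0 <= delta i)
  (heps : if b then 0 < eps else eps = 0)
  (hW : exists w, InW b q gamma eps kst w) :
  (* (a) inf f < 0 < sup f *)
  ((exists l, Lam_int q gamma l /\ fsec q gamma delta eps kst l < 0) /\
   (exists l, Lam_int q gamma l /\ 0 < fsec q gamma delta eps kst l) ->
   exists lh, Lam_int q gamma lh /\ fsec q gamma delta eps kst lh = 0 /\
     (forall l, Lam_int q gamma l -> fsec q gamma delta eps kst l = 0 -> l = lh) /\
     (forall w, What b q gamma delta eps kst w <-> w = wlam b q gamma delta eps lh) /\
     (forall w, Wcirc b q gamma delta eps kst w <-> w = wlam b q gamma delta eps lh))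
  /\
  (* (b) inf f = 0 = sup f *)
  ((forall l, Lam_int q gamma l -> fsec q gamma delta eps kst l = 0) ->
   (forall l, Lam_int q gamma l -> fsec q gamma delta eps kst l = 0) /\
   (forall w, What b q gamma delta eps kst w <-> w = (fun _ => 0)) /\
   (forall w, Wcirc b q gamma delta eps kst w <-> w = (fun _ => 0)))
  /\
  (* (c) all other cases *)
  (~ ((exists l, Lam_int q gamma l /\ fsec q gamma delta eps kst l < 0) /\
      (exists l, Lam_int q gamma l /\ 0 < fsec q gamma delta eps kst l)) ->
   ~ (forall l, Lam_int q gamma l -> fsec q gamma delta eps kst l = 0) ->
   (forall l, Lam_int q gamma l -> fsec q gamma delta eps kst l <> 0) /\
   (forall w, ~ Wcirc b q gamma delta eps kst w)).
Proof.
Proof. eapply main; eauto. Qed.
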